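(* Let $\mathbb{C}$ be a regular category. The following are equivalent: (i) $\mathbb{C}$ is a majority category. (ii) For any three reflexive relations $A,B,C$ on any object $X$, $(A\circ B)\cap(A\circ C)\leqslant A\circ(B\cap C)$. (iii) For any three reflexive relations $A,B,C$ on any object $X$, $A\cap(B\circ C)\leqslant (A\cap B)\circ(A\cap C)$. (iv) For any equivalence relations $\alpha,\beta,\gamma$ on any object $X$, $\alpha\cap(\beta\circ\gamma)=(\alpha\cap\beta)\circ(\alpha\cap\gamma)$. (v) For any effective equivalence relations $\alpha,\beta,\gamma$ on any object $X$, $\alpha\cap(\beta\circ\gamma)=(\alpha\cap\beta)\circ(\alpha\cap\gamma)$.
   Context: A category is regular if it has finite limits and coequalizers of kernel pairs and regular epimorphisms are pullback-stable; morphisms factor as regular epi followed by mono (image factorization). Relations on $X$ are subobjects of $X\times X$; reflexive if the diagonal factors through them; $\cap$ is intersection of subobjects (pullback). For $x:S\to X$ and a subobject $A$ of $X$, $x\in_S A$ means $x$ factors through a representative of $A$. The composite $R\circ S$ of relations $R$ (represented by $(r_1,r_2):R_0\to X\times Y$) and $S$ (represented by $(s_1,s_2):S_0\to Y\times Z$) is the image of $(r_1p_1,s_2p_2):P\to X\times Z$ where $(P,p_1,p_2)$ is the pullback of $s_1$ along $r_2$. An equivalence relation is effective if it is the kernel pair of some morphism. A ternary relation $R\leqslant X\times Y\times Z$ is majority-selecting if for all $S$ and $x,x':S\to X$, $y,y':S\to Y$, $z,z':S\to Z$: $(x,y,z')\in_S R$, $(x,y',z)\in_S R$, $(x',y,z)\in_S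 R$ imply $(x,y,z)\in_S R$; $\mathbb{C}$ is a majority category if every ternary relation in it is majority-selecting. *)

(* Defs.v *)
(** * Categories (hom-types with Leibniz equality of morphisms) *)
Record Cat := {
  Ob :> Type;
  Hom : Ob -> Ob -> Type;
  idm : forall A, Hom A A;
  comp : forall A B C, Hom B C -> Hom A B -> Hom A C;
  comp_assoc : forall A B C D (h : Hom C D) (g : Hom B C) (f : Hom A B),
      comp A C D h (comp A B C g f) = comp A B D (comp B C D h g) f;
  comp_id_l : forall A B (f : Hom A B), comp A B B (idm B) f = f;
  comp_id_r : forall A B (f : Hom A B), comp A A B f (idm A) = f
}.

Arguments Hom {c} _ _.
Arguments idm {c} _.
Arguments comp {c A B C} _ _.

Notation "g ∘ f" := (comp g f) (at level 40, left associativity).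

Section CatDefs.
Variable C : Cat.

Definition is_terminal (T : C) : Prop :=
  forall X : C, exists f : Hom X T, forall g : Hom X T, g = f.

Definition is_pullback {A B D : C} (f : Hom A D) (g : Hom B D)
    (P : C) (p1 : Hom P A) (p2 : Hom P B) : Prop :=
  f ∘ p1 = g ∘ p2 /\
  forall (T : C) (u : Hom T A) (v : Hom T B), f ∘ u = g ∘ v ->
    exists w : Hom T P, (p1 ∘ w = u /\ p2 ∘ w = v) /\
      forall w' : Hom T P, p1 ∘ w' = u -> p2 ∘ w' = v -> w' = w.

Definition has_finite_limits : Prop :=
  (exists T : C, is_terminal T) /\
  forall (A B D : C) (f : Hom A D) (g : Hom B D),
    exists (P : C) (p1 : Hom P A) (p2 : Hom P B), is_pullback f g P p1 p2.

Definition is_coequalizer {A B Q : C} (f g : Hom A B) (q : Hom B Q) : Prop :=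
  q ∘ f = q ∘ g /\
  forall (Z : C) (h : Hom B Z), h ∘ f = h ∘ g ->
    exists u : Hom Q Z, u ∘ q = h /\ forall u' : Hom Q Z, u' ∘ q = h -> u' = u.

Definition regular_epi {B Q : C} (q : Hom B Q) : Prop :=
  exists (A : C) (f g : Hom A B), is_coequalizer f g q.

Definition regular : Prop :=
  has_finite_limits /\
  (forall (A B : C) (f : Hom A B) (P : C) (p1 p2 : Hom P A),
      is_pullback f f P p1 p2 -> exists (Q : C) (q : Hom A Q), is_coequalizer p1 p2 q) /\
  (forall (A B D : C) (e : Hom A D) (g : Hom B D) (P : C) (p1 : Hom P A) (p2 : Hom P B),
      regular_epi e -> is_pullback e g P p1 p2 -> regular_epi p2).

(** A relation from X to Y is a subobject of X × Y; a morphism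
    into X × Y is a pair of morphisms and it is a monomorphism iff the pair is
    jointly monic.  We represent a relation by such a representative. *)
Record Rel (X Y : C) : Type := {
  rob : C;
  rl : Hom rob X;
  rr : Hom rob Y;
  rjm : forall (T : C) (u v : Hom T rob), rl ∘ u = rl ∘ v -> rr ∘ u = rr ∘ v -> u = v
}.

Arguments rob {X Y} _.
Arguments rl {X Y} _.
Arguments rr {X Y} _.

Definition mem2 {X Y : C} (R : Rel X Y) {S : C} (x : Hom S X) (y : Hom S Y) : Prop :=
  exists t : Hom S (rob R), rl R ∘ t = x /\ rr R ∘ t = y.

Definition rle {X Y : C} (R R' : Rel X Y) : Prop :=
  exists t : Hom (rob R) (rob R'), rl R' ∘ t = rl R /\ rr R' ∘ t = rr R.

Definition req {X Y : C} (R R' : Rel X Y) : Prop := rle R R' /\ rle R' R.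

Definition reflexive {X : C} (R : Rel X X) : Prop :=
  exists d : Hom X (rob R), rl R ∘ d = idm X /\ rr R ∘ d = idm X.

Definition symmetric {X : C} (R : Rel X X) : Prop :=
  forall (S : C) (x y : Hom S X), mem2 R x y -> mem2 R y x.

Definition transitive {X : C} (R : Rel X X) : Prop :=
  forall (S : C) (x y z : Hom S X), mem2 R x y -> mem2 R y z -> mem2 R x z.

Definition equivalence {X : C} (R : Rel X X) : Prop :=
  reflexive R /\ symmetric R /\ transitive R.

Definition effective {X : C} (R : Rel X X) : Prop :=
  exists (Y : C) (f : Hom X Y), is_pullback f f (rob R) (rl R) (rr R).

Definition is_intersection {X Y : C} (A B I : Rel X Y) : Prop :=
  exists (iA : Hom (rob I) (rob A)) (iB : Hom (rob I) (rob B)),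
    (rl A ∘ iA = rl I /\ rr A ∘ iA = rr I /\ rl B ∘ iB = rl I /\ rr B ∘ iB = rr I) /\
    forall (T : C) (u : Hom T (rob A)) (v : Hom T (rob B)),
      rl A ∘ u = rl B ∘ v -> rr A ∘ u = rr B ∘ v ->
      exists w : Hom T (rob I), iA ∘ w = u /\ iB ∘ w = v.

(** [K] is the composite R ∘ S (R from X to Y, S from Y to Z): the image
    (regular epi / mono factorization) of (r1 p1, s2 p2) : P -> X × Z where
    (P, p1, p2) is the pullback of s1 along r2. *)
Definition is_composite {X Y Z : C} (R : Rel X Y) (S : Rel Y Z) (K : Rel X Z) : Prop :=
  exists (P : C) (p1 : Hom P (rob R)) (p2 : Hom P (rob S)),
    is_pullback (rr R) (rl S) P p1 p2 /\
    exists e : Hom P (rob K),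
      regular_epi e /\ rl K ∘ e = rl R ∘ p1 /\ rr K ∘ e = rr S ∘ p2.

Record Rel3 (X Y Z : C) := {
  r3ob : C;
  r3a : Hom r3ob X;
  r3b : Hom r3ob Y;
  r3c : Hom r3ob Z;
  r3jm : forall (T : C) (u v : Hom T r3ob),
      r3a ∘ u = r3a ∘ v -> r3b ∘ u = r3b ∘ v -> r3c ∘ u = r3c ∘ v -> u = v
}.

Arguments r3ob {X Y Z} _.
Arguments r3a {X Y Z} _.
Arguments r3b {X Y Z} _.
Arguments r3c {X Y Z} _.

Definition mem3 {X Y Z : C} (R : Rel3 X Y Z) {S : C}
    (x : Hom S X) (y : Hom S Y) (z : Hom S Z) : Prop :=
  exists t : Hom S (r3ob R), r3a R ∘ t = x /\ r3b R ∘ t = y /\ r3c R ∘ t = z.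

Definition majority_selecting {X Y Z : C} (R : Rel3 X Y Z) : Prop :=
  forall (S : C) (x x' : Hom S X) (y y' : Hom S Y) (z z' : Hom S Z),
    mem3 R x y z' -> mem3 R x y' z -> mem3 R x' y z -> mem3 R x y z.

Definition majority_category : Prop :=
  forall (X Y Z : C) (R : Rel3 X Y Z), majority_selecting R.

End CatDefs.



Arguments is_terminal {C} _.
Arguments is_pullback {C A B D} _ _ _ _ _.
Arguments is_coequalizer {C A B Q} _ _ _.
Arguments regular_epi {C B Q} _.
Arguments mem2 {C X Y} _ {S} _ _.
Arguments rle {C X Y} _ _.
Arguments req {C X Y} _ _.
Arguments reflexive {C X} _.
Arguments symmetric {C X} _.
Arguments transitive {C X} _.
Arguments equivalence {C X} _.
Arguments effective {C X} _.
Arguments is_intersection {C X Y} _ _ _.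
Arguments is_composite {C X Y Z} _ _ _.
Arguments mem3 {C X Y Z} _ {S} _ _ _.
Arguments majority_selecting {C X Y Z} _.

(* Main.v *)
Require Import Defs.

Arguments rob {C X Y} _.
Arguments rl {C X Y} _.
Arguments rr {C X Y} _.
Arguments rjm {C X Y} _ {T} _ _ _ _.
Arguments r3ob {C X Y Z} _.
Arguments r3a {C X Y Z} _.
Arguments r3b {C X Y Z} _.
Arguments r3c {C X Y Z} _.
Arguments r3jm {C X Y Z} _ {T} _ _ _ _ _.

Ltac ra := repeat rewrite <- comp_assoc.
Ltac la := repeat rewrite comp_assoc.
Ltac raH H := repeat rewrite <- comp_assoc in H.
Ltac laH H := repeat rewrite comp_assoc in H.

Lemma pre2 {C : Cat} {A B D : C} {f : Hom B D} {g : Hom A B} {h : Hom A D} :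
  f ∘ g = h -> forall (T : C) (k : Hom T A), f ∘ (g ∘ k) = h ∘ k.
Proof. intros H T k. rewrite comp_assoc, H. reflexivity. Qed.

Lemma regepi_epi {C : Cat} {B Q : C} (q : Hom B Q) : regular_epi q ->
  forall Z (u v : Hom Q Z), u ∘ q = v ∘ q -> u = v.
Proof.
  intros [A [f [g [Hc Hu]]]] Z u v E.
  destruct (Hu Z (u ∘ q)) as [w [_ Hw]].
  { ra. rewrite Hc. reflexivity. }
  rewrite (Hw u eq_refl), (Hw v (eq_sym E)). reflexivity.
Qed.

Lemma pb_intro {C : Cat} {A B D P : C} {f : Hom A D} {g : Hom B D} {p1 : Hom P A} {p2 : Hom P B} :
  is_pullback f g P p1 p2 -> forall T (u : Hom T A) (v : Hom T B), f ∘ u = g ∘ v ->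
  exists w : Hom T P, p1 ∘ w = u /\ p2 ∘ w = v.
Proof. intros [_ H] T u v E. destruct (H T u v E) as [w [Hw _]]. eauto. Qed.

Lemma pb_uniq {C : Cat} {A B D P : C} {f : Hom A D} {g : Hom B D} {p1 : Hom P A} {p2 : Hom P B} :
  is_pullback f g P p1 p2 -> forall T (w w' : Hom T P), p1 ∘ w = p1 ∘ w' -> p2 ∘ w = p2 ∘ w' -> w = w'.
Proof.
  intros [Sq H] T w w' E1 E2.
  destruct (H T (p1 ∘ w') (p2 ∘ w')) as [z [_ Hz]].
  { la. rewrite Sq. reflexivity. }
  rewrite (Hz w E1 E2), (Hz w' eq_refl eq_refl). reflexivity.
Qed.

Lemma get_pb {C : Cat} (HC : regular C) {A B D : C} (f : Hom A D) (g : Hom B D) :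
  exists (P : C) (p1 : Hom P A) (p2 : Hom P B), is_pullback f g P p1 p2.
Proof. destruct HC as [[_ H] _]. apply H. Qed.

Lemma pb_stable {C : Cat} (HC : regular C) {A B D : C} (e : Hom A D) (g : Hom B D) :
  regular_epi e -> exists (P : C) (p1 : Hom P A) (p2 : Hom P B),
    is_pullback e g P p1 p2 /\ regular_epi p2.
Proof.
  intros He. destruct (get_pb HC e g) as [P [p1 [p2 Hp]]].
  exists P, p1, p2. split; [exact Hp|]. destruct HC as [_ [_ H]]. eapply H; eauto.
Qed.

Definition is_prod {C : Cat} {X Y P : C} (p1 : Hom P X) (p2 : Hom P Y) : Prop :=
  (forall S (f : Hom S X) (g : Hom S Y), exists h : Hom S P, p1 ∘ h = f /\ p2 ∘ h = g) /\
  (forall S (h h' : Hom S P), p1 ∘ h = p1 ∘ h' -> p2 ∘ h = p2 ∘ h' -> h = h').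

Lemma get_prod {C : Cat} (HC : regular C) (X Y : C) :
  exists (P : C) (p1 : Hom P X) (p2 : Hom P Y), is_prod p1 p2.
Proof.
  destruct HC as [[[T HT] Hpb] _].
  destruct (HT X) as [tX _]. destruct (HT Y) as [tY _].
  destruct (Hpb _ _ _ tX tY) as [P [p1 [p2 Hp]]].
  exists P, p1, p2. split.
  - intros S f g. apply (pb_intro Hp).
    destruct (HT S) as [tS HS]. rewrite (HS (tX ∘ f)), (HS (tY ∘ g)). reflexivity.
  - intros S h h'. apply (pb_uniq Hp).
Qed.

Lemma descend2 {C : Cat} {X Y S S' : C} (R : Rel C X Y) (c : Hom S' S) (x : Hom S X) (y : Hom S Y) :
  regular_epi c -> mem2 R (x ∘ c) (y ∘ c) -> mem2 R x y.
Proof.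
  intros Hc [t [E1 E2]].
  pose proof (regepi_epi c Hc) as Epi.
  destruct Hc as [A [f [g [Hq Hu]]]].
  destruct (Hu _ t) as [u [Hut _]].
  { apply (rjm R); la; rewrite ?E1, ?E2; ra; rewrite Hq; reflexivity. }
  exists u. split; apply Epi; ra; rewrite Hut; auto.
Qed.

Lemma descend3 {C : Cat} {X Y Z S S' : C} (R : Rel3 C X Y Z) (c : Hom S' S)
  (x : Hom S X) (y : Hom S Y) (z : Hom S Z) :
  regular_epi c -> mem3 R (x ∘ c) (y ∘ c) (z ∘ c) -> mem3 R x y z.
Proof.
  intros Hc [t [E1 [E2 E3]]].
  pose proof (regepi_epi c Hc) as Epi.
  destruct Hc as [A [f [g [Hq Hu]]]].
  destruct (Hu _ t) as [u [Hut _]].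
  { apply (r3jm R); la; rewrite ?E1, ?E2, ?E3; ra; rewrite Hq; reflexivity. }
  exists u. split; [|split]; apply Epi; ra; rewrite Hut; auto.
Qed.

Lemma image_fact {C : Cat} (HC : regular C) {P W : C} (f : Hom P W) :
  exists (Q : C) (q : Hom P Q) (m : Hom Q W), regular_epi q /\ m ∘ q = f /\
   (forall T (u v : Hom T Q), m ∘ u = m ∘ v -> u = v).
Proof.
  destruct (get_pb HC f f) as [K [k1 [k2 Hk]]].
  assert (HC' := HC). destruct HC' as [_ [Hcoeq _]].
  destruct (Hcoeq _ _ _ _ _ _ Hk) as [Q [q Hq]].
  assert (Rq : regular_epi q) by (exists K, k1, k2; exact Hq).
  destruct Hq as [Hqs Hqu].
  destruct (Hqu _ f (proj1 Hk)) as [m [Hm _]].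
  exists Q, q, m. split; [exact Rq|]. split; [exact Hm|].
  destruct (get_pb HC m m) as [L [l1 [l2 Hl]]].
  destruct (pb_stable HC q l1 Rq) as [P1 [a1 [b1 [H1 R1]]]].
  destruct (pb_stable HC q (l2 ∘ b1) Rq) as [P2 [a2 [b2 [H2 R2]]]].
  assert (E : f ∘ (a1 ∘ b2) = f ∘ a2).
  { rewrite <- Hm. ra. rewrite (pre2 (proj1 H1)). la.
    rewrite (proj1 Hl). ra. rewrite (proj1 H2). la. reflexivity. }
  destruct (pb_intro Hk _ _ _ E) as [k [Ek1 Ek2]].
  assert (E2 : l1 ∘ (b1 ∘ b2) = l2 ∘ (b1 ∘ b2)).
  { la. rewrite <- (proj1 H1). rewrite <- (proj1 H2). ra. rewrite <- Ek1, <- Ek2.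
    la. rewrite Hqs. reflexivity. }
  assert (E3 : l1 = l2).
  { apply (regepi_epi b1 R1). apply (regepi_epi b2 R2). ra. exact E2. }
  intros T u v Huv.
  destruct (pb_intro Hl _ _ _ Huv) as [w [Hw1 Hw2]].
  rewrite <- Hw1, <- Hw2, E3. reflexivity.
Qed.

Lemma image_rel {C : Cat} (HC : regular C) {P X Y : C} (f : Hom P X) (g : Hom P Y) :
  exists (R : Rel C X Y) (e : Hom P (rob R)), regular_epi e /\ rl R ∘ e = f /\ rr R ∘ e = g.
Proof.
  destruct (get_prod HC X Y) as [W [p1 [p2 [Hpair Hun]]]].
  destruct (Hpair _ f g) as [h [Hh1 Hh2]].
  destruct (image_fact HC h) as [Q [q [m [Rq [Hm Mono]]]]].
  unshelve eexists (Build_Rel C X Y Q (p1 ∘ m) (p2 ∘ m) _).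
  { intros T u v E1 E2. apply Mono. apply Hun; la; assumption. }
  exists q. simpl. split; [exact Rq|]. split; ra; rewrite Hm; assumption.
Qed.

Lemma image_rel3 {C : Cat} (HC : regular C) {P X Y Z : C} (f : Hom P X) (g : Hom P Y) (h : Hom P Z) :
  exists (R : Rel3 C X Y Z) (e : Hom P (r3ob R)),
    regular_epi e /\ r3a R ∘ e = f /\ r3b R ∘ e = g /\ r3c R ∘ e = h.
Proof.
  destruct (get_prod HC X Y) as [W [p1 [p2 [Hpair Hun]]]].
  destruct (get_prod HC W Z) as [V [v1 [v2 [Hpair' Hun']]]].
  destruct (Hpair _ f g) as [k [Hk1 Hk2]].
  destruct (Hpair' _ k h) as [l [Hl1 Hl2]].
  destruct (image_fact HC l) as [Q [q [m [Rq [Hm Mono]]]]].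
  unshelve eexists (Build_Rel3 C X Y Z Q (p1 ∘ (v1 ∘ m)) (p2 ∘ (v1 ∘ m)) (v2 ∘ m) _).
  { intros T u v E1 E2 E3. apply Mono. apply Hun'; [|la; assumption].
    apply Hun; la; repeat rewrite comp_assoc in E1; repeat rewrite comp_assoc in E2; assumption. }
  exists q. simpl. split; [exact Rq|]. split; [|split]; ra; rewrite Hm;
    rewrite ?Hl1, ?Hl2; auto.
Qed.

Lemma mem_cover {C : Cat} (HC : regular C) {P X Y : C} (R : Rel C X Y) (e : Hom P (rob R))
  (f : Hom P X) (g : Hom P Y) :
  regular_epi e -> rl R ∘ e = f -> rr R ∘ e = g ->
  forall S (x : Hom S X) (y : Hom S Y), mem2 R x y ->
  exists S' (c : Hom S' S) (p : Hom S' P), regular_epi c /\ f ∘ p = x ∘ c /\ g ∘ p = y ∘ c.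
Proof.
  intros Re Ef Eg S x y [t [Et1 Et2]].
  destruct (pb_stable HC e t Re) as [P' [p1 [p2 [Hp Rp]]]].
  exists P', p2, p1. split; [exact Rp|].
  rewrite <- Ef, <- Eg, <- Et1, <- Et2. ra. rewrite (proj1 Hp). auto.
Qed.

Lemma mem_cover3 {C : Cat} (HC : regular C) {P X Y Z : C} (R : Rel3 C X Y Z) (e : Hom P (r3ob R))
  (f : Hom P X) (g : Hom P Y) (h : Hom P Z) :
  regular_epi e -> r3a R ∘ e = f -> r3b R ∘ e = g -> r3c R ∘ e = h ->
  forall S (x : Hom S X) (y : Hom S Y) (z : Hom S Z), mem3 R x y z ->
  exists S' (c : Hom S' S) (p : Hom S' P), regular_epi c /\ f ∘ p = x ∘ c /\ g ∘ p = y ∘ c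
     /\ h ∘ p = z ∘ c.
Proof.
  intros Re Ef Eg Eh S x y z [t [Et1 [Et2 Et3]]].
  destruct (pb_stable HC e t Re) as [P' [p1 [p2 [Hp Rp]]]].
  exists P', p2, p1. split; [exact Rp|].
  rewrite <- Ef, <- Eg, <- Eh, <- Et1, <- Et2, <- Et3. ra. rewrite (proj1 Hp). auto.
Qed.

Lemma mem2_comp {C : Cat} {X Y S T : C} (R : Rel C X Y) (x : Hom S X) (y : Hom S Y) (h : Hom T S) :
  mem2 R x y -> mem2 R (x ∘ h) (y ∘ h).
Proof. intros [t [E1 E2]]. exists (t ∘ h). la. rewrite E1, E2. auto. Qed.

Lemma rle_of {C : Cat} {X Y : C} (R R' : Rel C X Y) :
  (forall S (x : Hom S X) (y : Hom S Y), mem2 R x y -> mem2 R' x y) -> rle R R'.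
Proof.
  intros H. destruct (H _ (rl R) (rr R)) as [t [E1 E2]].
  { exists (idm _). rewrite !comp_id_r. auto. }
  exists t. auto.
Qed.

Lemma rle_mem {C : Cat} {X Y : C} (R R' : Rel C X Y) : rle R R' ->
  forall S (x : Hom S X) (y : Hom S Y), mem2 R x y -> mem2 R' x y.
Proof.
  intros [t [E1 E2]] S x y [u [F1 F2]]. exists (t ∘ u). la. rewrite E1, E2. auto.
Qed.

Lemma comp_elim {C : Cat} (HC : regular C) {X Y Z : C} (R : Rel C X Y) (R' : Rel C Y Z) (K : Rel C X Z) :
  is_composite R R' K -> forall S (x : Hom S X) (z : Hom S Z), mem2 K x z ->
  exists S' (c : Hom S' S) (y : Hom S' Y), regular_epi c /\ mem2 R (x ∘ c) y /\ mem2 R' y (z ∘ c).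
Proof.
  intros [P [p1 [p2 [Hp [e [Re [E1 E2]]]]]]] S x z Hm.
  destruct (mem_cover HC K e _ _ Re E1 E2 S x z Hm) as [S' [c [p [Rc [F1 F2]]]]].
  exists S', c, (rr R ∘ (p1 ∘ p)). split; [exact Rc|]. split.
  - exists (p1 ∘ p). split; auto. la. exact F1.
  - exists (p2 ∘ p). split. la. rewrite <- (proj1 Hp). ra. auto. la. exact F2.
Qed.

Lemma comp_intro {C : Cat} {X Y Z : C} (R : Rel C X Y) (R' : Rel C Y Z) (K : Rel C X Z) :
  is_composite R R' K -> forall S (x : Hom S X) (y : Hom S Y) (z : Hom S Z),
  mem2 R x y -> mem2 R' y z -> mem2 K x z.
Proof.
  intros [P [p1 [p2 [Hp [e [Re [E1 E2]]]]]]] S x y z [a [A1 A2]] [b [B1 B2]].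
  destruct (pb_intro Hp _ a b) as [w [W1 W2]]. { rewrite A2, B1. auto. }
  exists (e ∘ w). la. rewrite E1, E2. ra. rewrite W1, W2. auto.
Qed.

Lemma inter_elim {C : Cat} {X Y : C} (A B I : Rel C X Y) : is_intersection A B I ->
  forall S (x : Hom S X) (y : Hom S Y), mem2 I x y -> mem2 A x y /\ mem2 B x y.
Proof.
  intros [iA [iB [[H1 [H2 [H3 H4]]] _]]] S x y [t [T1 T2]].
  split; [exists (iA ∘ t) | exists (iB ∘ t)]; la; rewrite ?H1, ?H2, ?H3, ?H4; auto.
Qed.

Lemma inter_intro {C : Cat} {X Y : C} (A B I : Rel C X Y) : is_intersection A B I ->
  forall S (x : Hom S X) (y : Hom S Y), mem2 A x y -> mem2 B x y -> mem2 I x y.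
Proof.
  intros [iA [iB [[H1 [H2 [H3 H4]]] Hu]]] S x y [a [A1 A2]] [b [B1 B2]].
  destruct (Hu _ a b) as [w [W1 W2]]. { rewrite A1, B1; auto. } { rewrite A2, B2; auto. }
  exists w. rewrite <- H1, <- H2. ra. rewrite W1. auto.
Qed.

Lemma comp_exists {C : Cat} (HC : regular C) {X Y Z : C} (R : Rel C X Y) (R' : Rel C Y Z) :
  exists K, is_composite R R' K.
Proof.
  destruct (get_pb HC (rr R) (rl R')) as [P [p1 [p2 Hp]]].
  destruct (image_rel HC (rl R ∘ p1) (rr R' ∘ p2)) as [K [e [Re [E1 E2]]]].
  exists K, P, p1, p2. split; [exact Hp|]. exists e. auto.
Qed.

Lemma inter_exists {C : Cat} (HC : regular C) {X Y : C} (A B : Rel C X Y) :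
  exists I, is_intersection A B I.
Proof.
  destruct (get_prod HC X Y) as [W [p1 [p2 [Hpair Hun]]]].
  destruct (Hpair _ (rl A) (rr A)) as [a [Ha1 Ha2]].
  destruct (Hpair _ (rl B) (rr B)) as [b [Hb1 Hb2]].
  destruct (get_pb HC a b) as [P [iA [iB Hp]]].
  assert (L1 : rl B ∘ iB = rl A ∘ iA).
  { rewrite <- Ha1, <- Hb1. ra. rewrite (proj1 Hp). auto. }
  assert (L2 : rr B ∘ iB = rr A ∘ iA).
  { rewrite <- Ha2, <- Hb2. ra. rewrite (proj1 Hp). auto. }
  unshelve eexists (Build_Rel C X Y P (rl A ∘ iA) (rr A ∘ iA) _).
  { intros T u v E1 E2. apply (pb_uniq Hp).
    - apply (rjm A); la; assumption.
    - apply (rjm B); la; rewrite ?L1, ?L2; assumption. }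
  exists iA, iB. simpl. split. { auto. }
  intros T u v U1 U2.
  destruct (pb_intro Hp _ u v) as [w [W1 W2]].
  { apply Hun; la; rewrite ?Ha1, ?Ha2, ?Hb1, ?Hb2; assumption. }
  eauto.
Qed.

Lemma kp_rel {C : Cat} (HC : regular C) {X Y : C} (f : Hom X Y) :
  exists K : Rel C X X, effective K /\ equivalence K /\
    forall S (u v : Hom S X), mem2 K u v <-> f ∘ u = f ∘ v.
Proof.
  destruct (get_pb HC f f) as [P [p1 [p2 Hp]]].
  exists (Build_Rel C X X P p1 p2 (pb_uniq Hp)).
  assert (M : forall S (u v : Hom S X), mem2 (Build_Rel C X X P p1 p2 (pb_uniq Hp)) u v <-> f ∘ u = f ∘ v).
  { intros S u v. split.
    - intros [t [T1 T2]]. simpl in *. rewrite <- T1, <- T2. la. rewrite (proj1 Hp). auto.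
    - intros E. destruct (pb_intro Hp _ _ _ E) as [w [W1 W2]]. exists w. auto. }
  split. { exists Y, f. exact Hp. }
  split; [|exact M].
  split; [|split].
  - destruct (proj2 (M _ (idm X) (idm X)) eq_refl) as [d Hd]. exists d. exact Hd.
  - intros S x y H. apply M. apply M in H. auto.
  - intros S x y z H1 H2. apply M. apply M in H1. apply M in H2. congruence.
Qed.

Lemma refl_mem {C : Cat} {X : C} (R : Rel C X X) : reflexive R ->
  forall S (x : Hom S X), mem2 R x x.
Proof.
  intros [d [D1 D2]] S x. exists (d ∘ x). la. rewrite D1, D2, comp_id_l. auto.
Qed.

Lemma v_to_i {C : Cat} (HC : regular C) :
  (forall (X : C) (a b g : Rel C X X),
     equivalence a -> equivalence b -> equivalence g ->
     effective a -> effective b -> effective g ->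
     forall bg a_bg ab ag ab_ag : Rel C X X,
       is_composite b g bg -> is_intersection a bg a_bg ->
       is_intersection a b ab -> is_intersection a g ag ->
       is_composite ab ag ab_ag ->
       req a_bg ab_ag) -> majority_category C.
Proof.
  intros H X Y Z R S x x' y y' z z' [t1 [A1 [B1 C1]]] [t2 [A2 [B2 C2]]] [t3 [A3 [B3 C3]]].
  destruct (kp_rel HC (r3a R)) as [al [Ea [Qa Ma]]].
  destruct (kp_rel HC (r3b R)) as [be [Eb [Qb Mb]]].
  destruct (kp_rel HC (r3c R)) as [ga [Eg [Qg Mg]]].
  destruct (comp_exists HC be ga) as [bg Hbg].
  destruct (inter_exists HC al bg) as [a_bg Ha_bg].
  destruct (inter_exists HC al be) as [ab Hab].
  destruct (inter_exists HC al ga) as [ag Hag].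
  destruct (comp_exists HC ab ag) as [ab_ag Hab_ag].
  destruct (H _ al be ga Qa Qb Qg Ea Eb Eg bg a_bg ab ag ab_ag Hbg Ha_bg Hab Hag Hab_ag)
    as [Hle _].
  assert (M : mem2 a_bg t1 t2).
  { apply (inter_intro _ _ _ Ha_bg).
    - apply Ma. rewrite A1, A2. auto.
    - apply (comp_intro _ _ _ Hbg _ _ t3).
      + apply Mb. rewrite B1, B3. auto.
      + apply Mg. rewrite C3, C2. auto. }
  apply (rle_mem _ _ Hle) in M.
  destruct (comp_elim HC _ _ _ Hab_ag _ _ _ M) as [S' [c [r [Rc [N1 N2]]]]].
  destruct (inter_elim _ _ _ Hab _ _ _ N1) as [N11 N12].
  destruct (inter_elim _ _ _ Hag _ _ _ N2) as [N21 N22].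
  apply Ma in N11. apply Mb in N12. apply Mg in N22.
  apply (descend3 R c _ _ _ Rc). exists r.
  rewrite comp_assoc, A1 in N11. rewrite comp_assoc, B1 in N12. rewrite comp_assoc, C2 in N22.
  auto.
Qed.

Lemma ii_to_i {C : Cat} (HC : regular C) :
  (forall (X : C) (A B D : Rel C X X),
     reflexive A -> reflexive B -> reflexive D ->
     forall AB AD BD AB_AD A_BD : Rel C X X,
       is_composite A B AB -> is_composite A D AD ->
       is_intersection AB AD AB_AD ->
       is_intersection B D BD -> is_composite A BD A_BD ->
       rle AB_AD A_BD) -> majority_category C.
Proof.
  intros H X Y Z R S x x' y y' z z' [t1 [A1 [B1 C1]]] [t2 [A2 [B2 C2]]] [t3 [A3 [B3 C3]]].
  destruct (kp_rel HC (r3a R)) as [al [Ea [Qa Ma]]].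
  destruct (kp_rel HC (r3b R)) as [be [Eb [Qb Mb]]].
  destruct (kp_rel HC (r3c R)) as [ga [Eg [Qg Mg]]].
  destruct (comp_exists HC be ga) as [AB HAB].
  destruct (comp_exists HC be al) as [AD HAD].
  destruct (inter_exists HC AB AD) as [AB_AD HAB_AD].
  destruct (inter_exists HC ga al) as [BD HBD].
  destruct (comp_exists HC be BD) as [A_BD HA_BD].
  pose proof (H _ be ga al (proj1 Qb) (proj1 Qg) (proj1 Qa) AB AD BD AB_AD A_BD
     HAB HAD HAB_AD HBD HA_BD) as Hle.
  assert (M : mem2 AB_AD t1 t2).
  { apply (inter_intro _ _ _ HAB_AD).
    - apply (comp_intro _ _ _ HAB _ _ t3).
      + apply Mb. rewrite B1, B3. auto.
      + apply Mg. rewrite C3, C2. auto.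
    - apply (comp_intro _ _ _ HAD _ _ t1).
      + apply Mb. auto.
      + apply Ma. rewrite A1, A2. auto. }
  apply (rle_mem _ _ Hle) in M.
  destruct (comp_elim HC _ _ _ HA_BD _ _ _ M) as [S' [c [r [Rc [N1 N2]]]]].
  destruct (inter_elim _ _ _ HBD _ _ _ N2) as [N21 N22].
  apply Mb in N1. apply Mg in N21. apply Ma in N22.
  apply (descend3 R c _ _ _ Rc). exists r.
  rewrite comp_assoc, B1 in N1. rewrite comp_assoc, C2 in N21. rewrite comp_assoc, A2 in N22.
  auto.
Qed.

Lemma iii_to_iv {C : Cat} (HC : regular C) :
  (forall (X : C) (A B D : Rel C X X),
     reflexive A -> reflexive B -> reflexive D ->
     forall BD A_BD AB AD AB_AD : Rel C X X,
       is_composite B D BD -> is_intersection A BD A_BD ->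
       is_intersection A B AB -> is_intersection A D AD ->
       is_composite AB AD AB_AD ->
       rle A_BD AB_AD) ->
  (forall (X : C) (a b g : Rel C X X),
     equivalence a -> equivalence b -> equivalence g ->
     forall bg a_bg ab ag ab_ag : Rel C X X,
       is_composite b g bg -> is_intersection a bg a_bg ->
       is_intersection a b ab -> is_intersection a g ag ->
       is_composite ab ag ab_ag ->
       req a_bg ab_ag).
Proof.
  intros H X a b g Qa Qb Qg bg a_bg ab ag ab_ag Hbg Ha_bg Hab Hag Hab_ag.
  split.
  - apply (H X a b g (proj1 Qa) (proj1 Qb) (proj1 Qg) bg a_bg ab ag ab_ag); assumption.
  - apply rle_of. intros S x z M.
    destruct (comp_elim HC _ _ _ Hab_ag _ _ _ M) as [S' [c [y [Rc [N1 N2]]]]].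
    destruct (inter_elim _ _ _ Hab _ _ _ N1) as [N11 N12].
    destruct (inter_elim _ _ _ Hag _ _ _ N2) as [N21 N22].
    apply (descend2 _ c _ _ Rc).
    apply (inter_intro _ _ _ Ha_bg).
    + destruct Qa as [_ [_ Ta]]. eapply Ta; eauto.
    + eapply (comp_intro _ _ _ Hbg); eauto.
Qed.

Lemma i_to_ii {C : Cat} (HC : regular C) : majority_category C ->
  (forall (X : C) (A B D : Rel C X X),
     reflexive A -> reflexive B -> reflexive D ->
     forall AB AD BD AB_AD A_BD : Rel C X X,
       is_composite A B AB -> is_composite A D AD ->
       is_intersection AB AD AB_AD ->
       is_intersection B D BD -> is_composite A BD A_BD ->
       rle AB_AD A_BD).
Proof.
  intros Hmaj X A B D rA rB rD AB AD BD AB_AD A_BD HAB HAD HI HBD HA_BD.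
  destruct (get_pb HC (rr A) (rl B)) as [Q1 [qa [qb HQ1]]].
  destruct (get_pb HC (rr A ∘ qa) (rl D)) as [Q2 [q1 [qd HQ2]]].
  destruct (image_rel3 HC (rl A ∘ (qa ∘ q1)) (rr B ∘ (qb ∘ q1)) (rr D ∘ qd))
    as [R [e [Re [E1 [E2 E3]]]]].
  assert (Intro : forall T (x w y z : Hom T X), mem2 A x w -> mem2 B w y -> mem2 D w z ->
                  mem3 R x y z).
  { intros T x w y z [a [a1 a2]] [v [v1 v2]] [q [q1' q2]].
    destruct (pb_intro HQ1 _ a v) as [m1 [M11 M12]]. { congruence. }
    destruct (pb_intro HQ2 _ m1 q) as [m2 [M21 M22]]. { ra. rewrite M11. congruence. }
    exists (e ∘ m2). la. rewrite E1, E2, E3. ra. rewrite M21, M22, M11, M12. auto. }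
  assert (Elim : forall T (x y z : Hom T X), mem3 R x y z ->
     exists T' (c : Hom T' T) (w : Hom T' X), regular_epi c /\
       mem2 A (x ∘ c) w /\ mem2 B w (y ∘ c) /\ mem2 D w (z ∘ c)).
  { intros T x y z M.
    destruct (mem_cover3 HC R e _ _ _ Re E1 E2 E3 _ _ _ _ M) as [T' [c [p [Rc [F1 [F2 F3]]]]]].
    exists T', c, (rr A ∘ (qa ∘ (q1 ∘ p))). split; [exact Rc|]. split; [|split].
    - exists (qa ∘ (q1 ∘ p)). split; auto. ra. raH F1. exact F1.
    - exists (qb ∘ (q1 ∘ p)). split. la. rewrite (proj1 HQ1). auto.
      ra. raH F2. exact F2.
    - exists (qd ∘ p). split. la. rewrite (proj1 HQ2). auto. ra. raH F3. exact F3. }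
  apply rle_of. intros S x z Hm.
  destruct (inter_elim _ _ _ HI _ _ _ Hm) as [M1 M2].
  destruct (comp_elim HC _ _ _ HAB _ _ _ M1) as [S1 [c1 [y1 [R1 [Ha1 Hb1]]]]].
  destruct (comp_elim HC _ _ _ HAD _ _ _ M2) as [S2 [c2 [y2 [R2 [Ha2 Hd2]]]]].
  destruct (pb_stable HC c2 c1 R2) as [P0 [p1 [p2 [Hp Rp]]]].
  apply (descend2 _ c1 _ _ R1). apply (descend2 _ p2 _ _ Rp).
  assert (Ex : (x ∘ c2) ∘ p1 = (x ∘ c1) ∘ p2). { ra. rewrite (proj1 Hp). auto. }
  assert (Ez : (z ∘ c2) ∘ p1 = (z ∘ c1) ∘ p2). { ra. rewrite (proj1 Hp). auto. }
  pose proof (mem2_comp _ _ _ p2 Ha1) as F1.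
  pose proof (mem2_comp _ _ _ p2 Hb1) as F2.
  pose proof (mem2_comp _ _ _ p1 Ha2) as F3. rewrite Ex in F3.
  pose proof (mem2_comp _ _ _ p1 Hd2) as F4. rewrite Ez in F4.
  assert (Hr : mem3 R ((x ∘ c1) ∘ p2) ((z ∘ c1) ∘ p2) ((z ∘ c1) ∘ p2)).
  { apply (Hmaj X X X R P0 _ ((z ∘ c1) ∘ p2) _ (y2 ∘ p1) _ (y1 ∘ p2)).
    - eapply Intro; [exact F1 | exact F2 | apply refl_mem; exact rD].
    - eapply Intro; [exact F3 | apply refl_mem; exact rB | exact F4].
    - eapply Intro; [apply refl_mem; exact rA | apply refl_mem; exact rB | apply refl_mem; exact rD]. }
  destruct (Elim _ _ _ _ Hr) as [T' [c [w [Rc [G1 [G2 G3]]]]]].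
  apply (descend2 _ c _ _ Rc).
  apply (comp_intro _ _ _ HA_BD _ _ w); [exact G1|].
  apply (inter_intro _ _ _ HBD); assumption.
Qed.

Lemma i_to_iii {C : Cat} (HC : regular C) : majority_category C ->
  (forall (X : C) (A B D : Rel C X X),
     reflexive A -> reflexive B -> reflexive D ->
     forall BD A_BD AB AD AB_AD : Rel C X X,
       is_composite B D BD -> is_intersection A BD A_BD ->
       is_intersection A B AB -> is_intersection A D AD ->
       is_composite AB AD AB_AD ->
       rle A_BD AB_AD).
Proof.
  intros Hmaj X A B D rA rB rD BD A_BD AB AD AB_AD HBD HA_BD HAB HAD HAB_AD.
  destruct (get_prod HC X X) as [W [pi1 [pi2 [Hpair Hun]]]].
  destruct (get_pb HC (rr A) (rl A)) as [Q1 [g1 [g2 HQ1]]].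
  destruct (get_pb HC (rr A ∘ g1) (rr B)) as [Q2 [h1 [hv HQ2]]].
  destruct (get_pb HC ((rr A ∘ g1) ∘ h1) (rl D)) as [Q3 [k1 [kq HQ3]]].
  destruct (Hpair _ (rl A ∘ (g1 ∘ (h1 ∘ k1))) (rr A ∘ (g2 ∘ (h1 ∘ k1)))) as [f1 [Ef1 Ef2]].
  destruct (image_rel3 HC f1 (rl B ∘ (hv ∘ k1)) (rr D ∘ kq))
    as [R [e [Re [E1 [E2 E3]]]]].
  assert (Intro : forall T (p : Hom T W) (w y z : Hom T X),
     mem2 A (pi1 ∘ p) w -> mem2 A w (pi2 ∘ p) -> mem2 B y w -> mem2 D w z -> mem3 R p y z).
  { intros T p w y z [u1 [u11 u12]] [u2 [u21 u22]] [v [v1 v2]] [q [q1' q2]].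
    destruct (pb_intro HQ1 _ u1 u2) as [m1 [M11 M12]]. { congruence. }
    destruct (pb_intro HQ2 _ m1 v) as [m2 [M21 M22]]. { ra. rewrite M11. congruence. }
    destruct (pb_intro HQ3 _ m2 q) as [m3 [M31 M32]]. { ra. rewrite M21, M11. congruence. }
    exists (e ∘ m3). la. rewrite E1, E2, E3. split; [|split].
    - apply Hun; la; rewrite ?Ef1, ?Ef2; ra; rewrite M31, M21, ?M11, ?M12; auto.
    - ra. rewrite M31, M22. auto.
    - ra. rewrite M32. auto. }
  assert (Elim : forall T (p : Hom T W) (y z : Hom T X), mem3 R p y z ->
     exists T' (c : Hom T' T) (w : Hom T' X), regular_epi c /\
       mem2 A (pi1 ∘ (p ∘ c)) w /\ mem2 A w (pi2 ∘ (p ∘ c)) /\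
       mem2 B (y ∘ c) w /\ mem2 D w (z ∘ c)).
  { intros T p y z M.
    destruct (mem_cover3 HC R e _ _ _ Re E1 E2 E3 _ _ _ _ M) as [T' [c [m [Rc [F1 [F2 F3]]]]]].
    exists T', c, (rr A ∘ (g1 ∘ (h1 ∘ (k1 ∘ m)))). split; [exact Rc|]. split; [|split; [|split]].
    - exists (g1 ∘ (h1 ∘ (k1 ∘ m))). split; auto. rewrite <- F1. la. rewrite Ef1. la. auto.
    - exists (g2 ∘ (h1 ∘ (k1 ∘ m))). split.
      + la. rewrite (proj1 HQ1). auto.
      + rewrite <- F1. la. rewrite Ef2. la. auto.
    - exists (hv ∘ (k1 ∘ m)). split.
      + raH F2. exact F2.
      + la. rewrite <- (proj1 HQ2). auto.
    - exists (kq ∘ m). split.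
      + la. rewrite <- (proj1 HQ3). auto.
      + ra. raH F3. exact F3. }
  apply rle_of. intros S x z Hm.
  destruct (inter_elim _ _ _ HA_BD _ _ _ Hm) as [Ma Mbd].
  destruct (comp_elim HC _ _ _ HBD _ _ _ Mbd) as [S1 [c1 [y [R1 [Hb Hd]]]]].
  pose proof (mem2_comp _ _ _ c1 Ma) as Ha.
  apply (descend2 _ c1 _ _ R1).
  destruct (Hpair _ (x ∘ c1) (z ∘ c1)) as [p0 [P01 P02]].
  destruct (Hpair _ y y) as [p' [P'1 P'2]].
  assert (Hr : mem3 R p0 (x ∘ c1) (z ∘ c1)).
  { apply (Hmaj _ _ _ R S1 p0 p' (x ∘ c1) (z ∘ c1) (z ∘ c1) (x ∘ c1)).
    - apply (Intro _ _ (x ∘ c1)); rewrite ?P01, ?P02; auto; apply refl_mem; auto.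
    - apply (Intro _ _ (z ∘ c1)); rewrite ?P01, ?P02; auto; apply refl_mem; auto.
    - apply (Intro _ _ y); rewrite ?P'1, ?P'2; auto; apply refl_mem; auto. }
  destruct (Elim _ _ _ _ Hr) as [T' [c [w [Rc [G1 [G2 [G3 G4]]]]]]].
  rewrite comp_assoc, P01 in G1. rewrite comp_assoc, P02 in G2.
  apply (descend2 _ c _ _ Rc).
  apply (comp_intro _ _ _ HAB_AD _ _ w).
  - apply (inter_intro _ _ _ HAB); assumption.
  - apply (inter_intro _ _ _ HAD); assumption.
Qed.

Theorem theorem3p3 (C : Cat) (HC : regular C) :
  (* (i) <-> (ii) *)
  (majority_category C <->
   forall (X : C) (A B D : Rel C X X),
     reflexive A -> reflexive B -> reflexive D ->
     forall AB AD BD AB_AD A_BD : Rel C X X,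
       is_composite A B AB -> is_composite A D AD ->
       is_intersection AB AD AB_AD ->
       is_intersection B D BD -> is_composite A BD A_BD ->
       rle AB_AD A_BD) /\
  (* (i) <-> (iii) *)
  (majority_category C <->
   forall (X : C) (A B D : Rel C X X),
     reflexive A -> reflexive B -> reflexive D ->
     forall BD A_BD AB AD AB_AD : Rel C X X,
       is_composite B D BD -> is_intersection A BD A_BD ->
       is_intersection A B AB -> is_intersection A D AD ->
       is_composite AB AD AB_AD ->
       rle A_BD AB_AD) /\
  (* (i) <-> (iv) *)
  (majority_category C <->
   forall (X : C) (a b g : Rel C X X),
     equivalence a -> equivalence b -> equivalence g ->
     forall bg a_bg ab ag ab_ag : Rel C X X,
       is_composite b g bg -> is_intersection a bg a_bg ->
       is_intersection a b ab -> is_intersection a g ag ->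
       is_composite ab ag ab_ag ->
       req a_bg ab_ag) /\
  (* (i) <-> (v) *)
  (majority_category C <->
   forall (X : C) (a b g : Rel C X X),
     equivalence a -> equivalence b -> equivalence g ->
     effective a -> effective b -> effective g ->
     forall bg a_bg ab ag ab_ag : Rel C X X,
       is_composite b g bg -> is_intersection a bg a_bg ->
       is_intersection a b ab -> is_intersection a g ag ->
       is_composite ab ag ab_ag ->
       req a_bg ab_ag).
Proof.
  split; [|split; [|split]].
  - split; [apply (i_to_ii HC) | apply (ii_to_i HC)].
  - split; [apply (i_to_iii HC)|].
    intros H. apply (v_to_i HC). intros X a b g Qa Qb Qg _ _ _.
    apply (iii_to_iv HC H); assumption.
  - split; [intros Hm; apply (iii_to_iv HC (i_to_iii HC Hm))|].
    intros H. apply (v_to_i HC). intros X a b g Qa Qb Qg _ _ _. apply H; assumption.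
  - split; [|apply (v_to_i HC)].
    intros Hm X a b g Qa Qb Qg _ _ _. apply (iii_to_iv HC (i_to_iii HC Hm)); assumption.
Qed.
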